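(* For $a\in\mathcal{A}'$ write $\overline{a}=a+\mathrm{II}\in\mathcal{A}'/\mathrm{II}$. Then for all $a\in\mathcal{A}'$, all $i,j\in\{1,\dots,n\}$ and every rational function $\phi(t)$ with $\phi(H)\in\mathcal{A}'$: \begin{align*} \overline{a}\diamond\overline{\partial_j}&=\overline{a\partial_j}, & \overline{x^i}\diamond\overline{a}&=\overline{x^ia},\\ \overline{\partial_i}\diamond\overline{\gamma^j}&=\overline{\partial_i\gamma^j-\varphi_1(H-1)\gamma_i\partial^j}, & \overline{\gamma^i}\diamond\overline{\gamma^j}&=\overline{\gamma^i\gamma^j-2\varphi_1(H)x^i\partial^j},\\ \overline{\partial_i}\diamond\overline{x^j}&=\overline{\partial_ix^j-\tfrac{\varphi_1(H-1)}{2}\gamma_i\gamma^j+\varphi_2(H-1)x_i\partial^j}, & \overline{\gamma^i}\diamond\overline{x^j}&=\overline{\gamma^ix^j-\varphi_1(H)x^i\gamma^j},\\ \overline{\phi(H)}\diamond\overline{a}&=\overline{\phi(H)a}, & \overline{a}\diamond\overline{\phi(H)}&=\overline{a\phi(H)}. \end{align*}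
   Context: Fix $n\ge1$ and an invertible complex matrix $\eta=(\eta^{ij})$ with $\eta^{ij}=\eta^{ji}$ and inverse $(\eta_{ij})$. $\mathcal{A}=W(2n|n)$ is the associative superalgebra generated by even $x^1,\dots,x^n,\partial_1,\dots,\partial_n$ and odd $\gamma^1,\dots,\gamma^n$ with relations $x^ix^j=x^jx^i$, $\partial_i\partial_j=\partial_j\partial_i$, $\partial_ix^j-x^j\partial_i=\delta_i^j$, $\gamma^i$ commuting with all $x^j,\partial_j$, $\gamma^i\gamma^j+\gamma^j\gamma^i=2\eta^{ij}$. Repeated indices are summed; $x_i=\eta_{ij}x^j$, $\partial^i=\eta^{ij}\partial_j$, $\gamma_i=\eta_{ij}\gamma^j$. Set $X=\frac{\sqrt{-1}}{\sqrt2}\gamma^i\partial_i$, $Y=\frac{\sqrt{-1}}{\sqrt2}\gamma^ix_i$, $H=-\frac12(\partial_ix^i+x^i\partial_i)$, $E=-\frac12\partial^i\partial_i$, $F=\frac12x^ix_i$. Let $\mathcal{A}'$ be the localization of $\mathcal{A}$ at the multiplicative set generated by $\{H+k:k\in\mathbb{Z}\}$, and $\mathrm{II}:=Y\mathcal{A}'+F\mathcal{A}'+\mathcal{A}'X+\mathcal{A}'E$. Define $\kappa_k(t)=-k/2$ for $k$ even and $\kappa_k(t)=t+\frac{k+1}{2}$ for $k$ odd, and $\varphi_n(t)=\prod_{k=1}^n\frac{(-1)^k}{\kappa_k(t)}$ (so $\varphi_0=1$, $\varphi_1(t)=-\frac1{t+1}$, $\varphi_2(t)=\frac1{t+1}$).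 The diamond product on $\mathcal{A}'/\mathrm{II}$ is $\overline a\diamond\overline b:=\sum_{k\ge0}a\,\varphi_k(H)Y^kX^k\,b+\mathrm{II}$, where all but finitely many summands lie in $\mathrm{II}$ (as $X$ acts locally nilpotently). *)

(* Defs.v *)
(* Scalars: algC (algebraic complex numbers, containing
   sqrt(-1) and sqrt 2).  The superalgebra A' = W(2n|n) localized at
   {H+k : k in Z} is presented by generators and relations:
   terms of the free C-algebra on x^i, d_i, g^i (0-based i : 'I_n) and
   u_k (k : int, standing for (H+k)^{-1}), modulo the smallest congruence
   [teq] containing the unital associative C-algebra axioms and the
   defining relations of W(2n|n) together with u_k (H+k) = (H+k) u_k = 1.
   (Universally inverting a set of elements is the same as the Ore
   localization when the latter exists, by its universal property.) *)
From HB Require Import structures.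
From mathcomp Require Import all_boot all_order all_algebra all_field.
Set Implicit Arguments. Unset Strict Implicit. Unset Printing Implicit Defensive.
Import Order.TTheory GRing.Theory Num.Theory.
Local Open Scope ring_scope.

Section WeylClifford.
Variable n : nat.

Inductive term : Type :=
| tS of algC
| tx of 'I_n
| td of 'I_n
| tg of 'I_n
| tu of int
| tadd of term & term
| tmul of term & term.

Definition tscale (c : algC) (a : term) := tmul (tS c) a.
Definition tsub (a b : term) := tadd a (tscale (-1) b).
Definition tpow (a : term) (k : nat) := iter k (tmul a) (tS 1).
Definition tsum (f : 'I_n -> term) :=
  foldr (fun i acc => tadd (f i) acc) (tS 0) (enum 'I_n).
Definition tsumn (N : nat) (f : nat -> term) :=
  foldr (fun k acc => tadd (f k) acc) (tS 0) (iota 0 N).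

Definition Hterm : term :=
  tscale (-1/2) (tsum (fun i => tadd (tmul (td i) (tx i)) (tmul (tx i) (td i)))).

Variable eta : 'M[algC]_n.
Definition etainv := invmx eta.

Definition xlow (i : 'I_n) := tsum (fun j => tscale (etainv i j) (tx j)).
Definition glow (i : 'I_n) := tsum (fun j => tscale (etainv i j) (tg j)).
Definition dup  (i : 'I_n) := tsum (fun j => tscale (eta i j) (td j)).

Definition Xterm := tscale ('i / sqrtC 2) (tsum (fun i => tmul (tg i) (td i))).
Definition Yterm := tscale ('i / sqrtC 2) (tsum (fun i => tmul (tg i) (xlow i))).
Definition Eterm := tscale (-1/2) (tsum (fun i => tmul (dup i) (td i))).
Definition Fterm := tscale (1/2) (tsum (fun i => tmul (tx i) (xlow i))).

Inductive teq : term -> term -> Prop :=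
| teq_refl a : teq a a
| teq_sym a b : teq a b -> teq b a
| teq_trans a b c : teq a b -> teq b c -> teq a c
| teq_add a a' b b' : teq a a' -> teq b b' -> teq (tadd a b) (tadd a' b')
| teq_mul a a' b b' : teq a a' -> teq b b' -> teq (tmul a b) (tmul a' b')
| teq_addA a b c : teq (tadd a (tadd b c)) (tadd (tadd a b) c)
| teq_addC a b : teq (tadd a b) (tadd b a)
| teq_add0 a : teq (tadd (tS 0) a) a
| teq_addN a : teq (tadd a (tscale (-1) a)) (tS 0)
| teq_mulA a b c : teq (tmul a (tmul b c)) (tmul (tmul a b) c)
| teq_mul1l a : teq (tmul (tS 1) a) a
| teq_mul1r a : teq (tmul a (tS 1)) a
| teq_mulDl a b c : teq (tmul (tadd a b) c) (tadd (tmul a c) (tmul b c))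
| teq_mulDr a b c : teq (tmul a (tadd b c)) (tadd (tmul a b) (tmul a c))
| teq_SD c d : teq (tS (c + d)) (tadd (tS c) (tS d))
| teq_SM c d : teq (tS (c * d)) (tmul (tS c) (tS d))
| teq_Scentral c a : teq (tmul (tS c) a) (tmul a (tS c))
| teq_xx i j : teq (tmul (tx i) (tx j)) (tmul (tx j) (tx i))
| teq_dd i j : teq (tmul (td i) (td j)) (tmul (td j) (td i))
| teq_dx i j : teq (tsub (tmul (td i) (tx j)) (tmul (tx j) (td i))) (tS (i == j)%:R)
| teq_gx i j : teq (tmul (tg i) (tx j)) (tmul (tx j) (tg i))
| teq_gd i j : teq (tmul (tg i) (td j)) (tmul (td j) (tg i))
| teq_gg i j : teq (tadd (tmul (tg i) (tg j)) (tmul (tg j) (tg i))) (tS (2 * eta i j))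
| teq_ul k : teq (tmul (tu k) (tadd Hterm (tS k%:~R))) (tS 1)
| teq_ur k : teq (tmul (tadd Hterm (tS k%:~R)) (tu k)) (tS 1).

Definition inII (t : term) : Prop :=
  exists p q r s, teq t (tadd (tadd (tmul Yterm p) (tmul Fterm q))
                              (tadd (tmul r Xterm) (tmul s Eterm))).

Definition qeq (a b : term) : Prop := inII (tsub a b).

(* kappa_k(H + m)^{-1} *)
Definition kinv (k : nat) (m : int) : term :=
  if odd k then tu (m + (k.+1./2)%:Z) else tS ((- (k./2)%:R)^-1).
(* varphi_k(H + m) = prod_{k'=1}^k (-1)^{k'} / kappa_{k'}(H + m) *)
Definition phiH (m : int) (k : nat) : term :=
  foldr (fun k' acc => tmul (tmul (tS ((-1) ^+ k')) (kinv k' m)) acc)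
        (tS 1) (iota 1 k).

(* k-th summand of the diamond product: a varphi_k(H) Y^k X^k b *)
Definition dterm (a b : term) (k : nat) : term :=
  tmul (tmul (tmul (tmul a (phiH 0 k)) (tpow Yterm k)) (tpow Xterm k)) b.

(* [diamond_is a b c] : all but finitely many summands lie in II and
   abar <> bbar = cbar *)
Definition diamond_is (a b c : term) : Prop :=
  exists N, (forall k, (N <= k)%N -> inII (dterm a b k)) /\
            qeq (tsumn N (dterm a b)) c.

Definition polyH (p : {poly algC}) : term :=
  tsumn (size p) (fun i => tscale p`_i (tpow Hterm i)).
(* the rational function phi(t) = p(t) / prod_{k in s} (t + k), evaluated at H *)
Definition ratH (p : {poly algC}) (s : seq int) : term :=
  tmul (polyH p) (foldr (fun k acc => tmul (tu k) acc) (tS 1) s).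

End WeylClifford.

(* Main.v *)
Require Import Defs.
From HB Require Import structures.
From mathcomp Require Import all_boot all_order all_algebra all_field.
From mathcomp Require Import boolp.
From Stdlib Require Import Setoid Morphisms.
From mathcomp Require Import ring.
Import Order.TTheory GRing.Theory Num.Theory.
Local Open Scope ring_scope.
Set Implicit Arguments. Unset Strict Implicit. Unset Printing Implicit Defensive.

Section Quot.
Variable n : nat.
Variable eta : 'M[algC]_n.
Hypothesis eta_sym : eta^T = eta.
Hypothesis eta_inv : eta \in unitmx.
Local Notation T := (term n).
Local Notation teq := (teq eta).

Definition Qt := {S : T -> Prop | exists t, S = teq t}.
Definition cls (t : T) : Qt := exist _ (teq t) (ex_intro _ t erefl).
Definition rep (q : Qt) : T := projT1 (cid (proj2_sig q)).

Lemma repK q : cls (rep q) = q.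
Proof.
rewrite /rep; case: (cid _) => t /= ht; case: q ht => S pS /= ht.
subst S; congr exist; exact: Prop_irrelevance.
Qed.

Lemma cls_surj q : exists t, q = cls t.
Proof. by exists (rep q); rewrite repK. Qed.

Lemma cls_eq a b : (cls a = cls b) <-> teq a b.
Proof.
split.
- move=> /(congr1 (@proj1_sig _ _)) /= E.
  have : teq b b by constructor.
  rewrite -E => H; exact H.
- move=> H; apply/eq_exist; apply: funext => x; apply: propext; split => Hx.
  + exact: teq_trans (teq_sym H) Hx.
  + exact: teq_trans H Hx.
Qed.

Lemma teq_rep a : teq (rep (cls a)) a.
Proof. by apply/cls_eq; rewrite repK. Qed.

HB.instance Definition _ := gen_eqMixin Qt.
HB.instance Definition _ := gen_choiceMixin Qt.

Definition qadd p q := cls (tadd (rep p) (rep q)).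
Definition qmul p q := cls (tmul (rep p) (rep q)).
Definition qopp q := cls (tscale (-1) (rep q)).
Definition qzero := cls (tS n 0).
Definition qone := cls (tS n 1).

Lemma clsD a b : cls (tadd a b) = qadd (cls a) (cls b).
Proof. apply/cls_eq; apply: teq_add; apply: teq_sym; apply: teq_rep. Qed.
Lemma clsM a b : cls (tmul a b) = qmul (cls a) (cls b).
Proof. apply/cls_eq; apply: teq_mul; apply: teq_sym; apply: teq_rep. Qed.
Lemma clsN a : cls (tscale (-1) a) = qopp (cls a).
Proof. apply/cls_eq; apply: teq_mul; [constructor| apply: teq_sym; apply: teq_rep]. Qed.

Ltac qel := repeat (let q := fresh "q" in move=> q; case: (cls_surj q) => ? ->{q}).

Lemma qaddA : associative qadd.
Proof. qel; rewrite -!clsD; apply/cls_eq; exact: teq_addA. Qed.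
Lemma qaddC : commutative qadd.
Proof. qel; rewrite -!clsD; apply/cls_eq; exact: teq_addC. Qed.
Lemma qadd0 : left_id qzero qadd.
Proof. qel; rewrite -!clsD; apply/cls_eq; exact: teq_add0. Qed.
Lemma qaddN : left_inverse qzero qopp qadd.
Proof. qel; rewrite -clsN -!clsD; apply/cls_eq; apply: teq_trans (teq_addC _ _ _) _; exact: teq_addN. Qed.

HB.instance Definition _ := GRing.isZmodule.Build Qt qaddA qaddC qadd0 qaddN.

Lemma qmulA : associative qmul.
Proof. qel; rewrite -!clsM; apply/cls_eq; exact: teq_mulA. Qed.
Lemma qmul1 : left_id qone qmul.
Proof. qel; rewrite -!clsM; apply/cls_eq; exact: teq_mul1l. Qed.
Lemma qmul1r : right_id qone qmul.
Proof. qel; rewrite -!clsM; apply/cls_eq; exact: teq_mul1r. Qed.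
Lemma qmulDl : left_distributive qmul qadd.
Proof.
move=> p q r; case: (cls_surj p) => a ->; case: (cls_surj q) => b ->; case: (cls_surj r) => c ->.
rewrite -(clsD a b) -(clsM (tadd a b) c) -(clsM a c) -(clsM b c) -(clsD (tmul a c) (tmul b c)).
apply/cls_eq; exact: teq_mulDl.
Qed.
Lemma qmulDr : right_distributive qmul qadd.
Proof.
move=> p q r; case: (cls_surj p) => a ->; case: (cls_surj q) => b ->; case: (cls_surj r) => c ->.
rewrite -(clsD b c) -(clsM a (tadd b c)) -(clsM a b) -(clsM a c) -(clsD (tmul a b) (tmul a c)).
apply/cls_eq; exact: teq_mulDr.
Qed.

HB.instance Definition _ := GRing.Zmodule_isPzRing.Build Qt qmulA qmul1 qmul1r qmulDl qmulDr.

Lemma cD a b : cls (tadd a b) = cls a + cls b. Proof. exact: clsD. Qed.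
Lemma cM a b : cls (tmul a b) = cls a * cls b. Proof. exact: clsM. Qed.
Lemma c0 : cls (tS n 0) = 0. Proof. by []. Qed.
Lemma c1 : cls (tS n 1) = 1. Proof. by []. Qed.


Definition sc (c : algC) : Qt := cls (tS n c).
Lemma sc_comm c q : sc c * q = q * sc c.
Proof. case: (cls_surj q) => a ->; rewrite /sc -!cM; apply/cls_eq; exact: teq_Scentral. Qed.
Lemma scD c d : sc (c + d) = sc c + sc d.
Proof. by rewrite /sc -cD; apply/cls_eq; exact: teq_SD. Qed.
Lemma scM c d : sc (c * d) = sc c * sc d.
Proof. by rewrite /sc -cM; apply/cls_eq; exact: teq_SM. Qed.
Lemma sc0 : sc 0 = 0. Proof. by []. Qed.
Lemma sc1 : sc 1 = 1. Proof. by []. Qed.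
Lemma scN1 q : sc (-1) * q = - q.
Proof. case: (cls_surj q) => a ->; rewrite /sc -cM; exact: clsN. Qed.
Lemma scN c : sc (- c) = - sc c.
Proof. by rewrite -mulN1r scM scN1. Qed.
Lemma scB c d : sc (c - d) = sc c - sc d.
Proof. by rewrite scD scN. Qed.
Lemma scn k : sc k%:R = k%:R.
Proof. by elim: k => // k IH; rewrite -addn1 !natrD scD IH. Qed.
Lemma scz (k : int) : sc k%:~R = k%:~R.
Proof. by case: k => k; rewrite ?NegzE ?mulrNz ?scN scn. Qed.

Lemma cS c : cls (tS n c) = sc c. Proof. by []. Qed.
Lemma cscale c a : cls (tscale c a) = sc c * cls a. Proof. by rewrite /tscale cM. Qed.
Lemma csub a b : cls (tsub a b) = cls a - cls b.
Proof. by rewrite /tsub cD cscale scN1. Qed.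
Lemma cpow a k : cls (tpow a k) = cls a ^+ k.
Proof. by elim: k => // k IH; rewrite /tpow iterS cM -/(tpow a k) IH exprS. Qed.
Lemma cfoldadd (I : Type) (f : I -> T) (s : seq I) :
  cls (foldr (fun i acc => tadd (f i) acc) (tS n 0) s) = \sum_(i <- s) cls (f i).
Proof. by elim: s => [|i s IH] /=; rewrite ?big_nil ?big_cons // cD IH. Qed.
Lemma cfoldmul (I : Type) (f : I -> T) (s : seq I) :
  cls (foldr (fun i acc => tmul (f i) acc) (tS n 1) s) = \prod_(i <- s) cls (f i).
Proof. by elim: s => [|i s IH] /=; rewrite ?big_nil ?big_cons // cM IH. Qed.
Lemma csum (f : 'I_n -> T) : cls (tsum f) = \sum_i cls (f i).
Proof. by rewrite /tsum cfoldadd big_enum. Qed.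
Lemma csumn N (f : nat -> T) : cls (tsumn N f) = \sum_(0 <= k < N) cls (f k).
Proof. by rewrite /tsumn cfoldadd /index_iota subn0. Qed.


Definition Xv i := cls (tx i).
Definition Dv i := cls (td i).
Definition Gv i := cls (tg i).
Definition Uv k := cls (tu n k).
Definition Hq := cls (Hterm n).
Definition Xq := cls (Xterm n).
Definition Yq := cls (Yterm eta).
Definition Eq := cls (Eterm eta).
Definition Fq := cls (Fterm eta).
Definition einv := invmx eta.
Definition XL i := \sum_j sc (einv i j) * Xv j.
Definition GL i := \sum_j sc (einv i j) * Gv j.
Definition DU i := \sum_j sc (eta i j) * Dv j.
Definition cc : algC := locked ('i / sqrtC 2).
Lemma ccE : 'i / sqrtC 2 = cc. Proof. by rewrite /cc -lock. Qed.

Lemma XLE i : cls (xlow eta i) = XL i.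
Proof. by rewrite /xlow csum; apply: eq_bigr => j _; rewrite cscale. Qed.
Lemma GLE i : cls (glow eta i) = GL i.
Proof. by rewrite /glow csum; apply: eq_bigr => j _; rewrite cscale. Qed.
Lemma DUE i : cls (dup eta i) = DU i.
Proof. by rewrite /dup csum; apply: eq_bigr => j _; rewrite cscale. Qed.
Lemma HqE : Hq = sc (-1/2) * \sum_i (Dv i * Xv i + Xv i * Dv i).
Proof. by rewrite /Hq /Hterm cscale csum; congr (_ * _); apply: eq_bigr => i _; rewrite cD !cM. Qed.
Lemma XqE : Xq = sc cc * \sum_i (Gv i * Dv i).
Proof. by rewrite /Xq /Xterm cscale csum ccE; congr (_ * _); apply: eq_bigr => i _; rewrite !cM. Qed.
Lemma YqE : Yq = sc cc * \sum_i (Gv i * XL i).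
Proof. by rewrite /Yq /Yterm cscale csum ccE; congr (_ * _); apply: eq_bigr => i _; rewrite !cM XLE. Qed.

Lemma rxx i j : Xv i * Xv j = Xv j * Xv i.
Proof. by rewrite /Xv -!cM; apply/cls_eq; exact: teq_xx. Qed.
Lemma rdd i j : Dv i * Dv j = Dv j * Dv i.
Proof. by rewrite /Dv -!cM; apply/cls_eq; exact: teq_dd. Qed.
Lemma rdx i j : Dv i * Xv j = Xv j * Dv i + sc (i == j)%:R.
Proof.
have := teq_dx eta i j; move/cls_eq; rewrite csub !cM -/(Dv i) -/(Xv j) => E; rewrite /sc -E.
by rewrite addrC subrK.
Qed.
Lemma rgx i j : Gv i * Xv j = Xv j * Gv i.
Proof. by rewrite /Xv -!cM; apply/cls_eq; exact: teq_gx. Qed.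
Lemma rgd i j : Gv i * Dv j = Dv j * Gv i.
Proof. by rewrite /Xv -!cM; apply/cls_eq; exact: teq_gd. Qed.
Lemma rgg i j : Gv i * Gv j = sc (2 * eta i j) - Gv j * Gv i.
Proof.
have := teq_gg eta i j; move/cls_eq; rewrite cD !cM -/(Gv i) -/(Gv j) => E; rewrite /sc -E.
by rewrite addrK.
Qed.
Lemma rul k : Uv k * (Hq + sc k%:~R) = 1.
Proof. have := teq_ul eta k; move/cls_eq; by rewrite cM cD. Qed.
Lemma rur k : (Hq + sc k%:~R) * Uv k = 1.
Proof. have := teq_ur eta k; move/cls_eq; by rewrite cM cD. Qed.


Lemma sc_sum (I : Type) (r : seq I) (P : pred I) (F : I -> algC) :
  sc (\sum_(i <- r | P i) F i) = \sum_(i <- r | P i) sc (F i).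
Proof. exact: (big_morph sc scD sc0). Qed.

Lemma sum_delta (F : 'I_n -> Qt) i : \sum_k sc (k == i)%:R * F k = F i.
Proof.
rewrite (bigD1 i) //= eqxx sc1 mul1r big1 ?addr0 // => k /negbTE ->.
by rewrite sc0 mul0r.
Qed.
Lemma sum_delta' (F : 'I_n -> Qt) i : \sum_k sc (i == k)%:R * F k = F i.
Proof. by rewrite -[RHS](sum_delta F); apply: eq_bigr => k _; rewrite eq_sym. Qed.

Lemma etaS i j : eta i j = eta j i.
Proof. by rewrite -{1}eta_sym mxE. Qed.

Lemma sc_commr c q : q * sc c = sc c * q. Proof. by rewrite sc_comm. Qed.

Lemma commDX j : GRing.comm (Dv j) Xq.
Proof.
rewrite XqE; apply: commrM; first exact: esym (sc_comm _ _).
apply: commr_sum => i _; apply: commrM; first exact: esym (rgd _ _).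
exact: rdd.
Qed.
Lemma commXY j : GRing.comm (Xv j) Yq.
Proof.
rewrite YqE; apply: commrM; first exact: esym (sc_comm _ _).
apply: commr_sum => i _; apply: commrM; first exact: esym (rgx _ _).
apply: commr_sum => k _; apply: commrM; first exact: esym (sc_comm _ _).
exact: rxx.
Qed.
Lemma commGXL i k : GRing.comm (Gv i) (XL k).
Proof.
apply: commr_sum => m _; apply: commrM; first exact: esym (sc_comm _ _).
exact: rgx.
Qed.

Lemma rXG j : Xq * Gv j = sc (2 * cc) * DU j - Gv j * Xq.
Proof.
rewrite XqE -mulrA mulr_suml.
under eq_bigr => k _ do rewrite -mulrA -rgd mulrA rgg mulrBl.
rewrite sumrB mulrBr; congr (_ - _).
  rewrite [2 * cc]mulrC scM -mulrA; congr (_ * _).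
  rewrite /DU mulr_sumr; apply: eq_bigr => k _.
  by rewrite mulrA -scM etaS.
rewrite mulrA -(sc_comm cc (Gv j)) -mulrA mulr_sumr; congr (_ * _).
by apply: eq_bigr => k _; rewrite mulrA.
Qed.

Lemma eta_einv i m : \sum_k eta i k * einv k m = (i == m)%:R.
Proof.
have := mulmxV eta_inv; move/(congr1 (fun M : 'M[algC]_n => M i m)); rewrite !mxE => <-.
by apply: eq_bigr => k _.
Qed.
Lemma einvS i j : einv i j = einv j i.
Proof. by rewrite /einv -{1}eta_sym -trmx_inv mxE. Qed.

Lemma rXx j : Xq * Xv j = Xv j * Xq + sc cc * Gv j.
Proof.
rewrite XqE -mulrA mulr_suml.
under eq_bigr => k _ do rewrite -mulrA rdx mulrDr.
rewrite big_split mulrDr; congr (_ + _).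
  rewrite mulrA -(sc_comm cc (Xv j)) -mulrA mulr_sumr; congr (_ * _).
  by apply: eq_bigr => k _; rewrite !mulrA rgx.
congr (_ * _); rewrite -[RHS](sum_delta Gv j); apply: eq_bigr => k _.
by rewrite sc_comm.
Qed.

Lemma sum2Xv i : \sum_k sc (2 * eta i k) * XL k = sc 2 * Xv i.
Proof.
rewrite /XL.
under eq_bigr => k _ do rewrite mulr_sumr.
rewrite exchange_big /= -(sum_delta' Xv i) mulr_sumr; apply: eq_bigr => m _.
rewrite -eta_einv sc_sum mulr_suml mulr_sumr; apply: eq_bigr => k _.
by rewrite !mulrA -!scM mulrA.
Qed.

Lemma rGY i : Gv i * Yq = sc (2 * cc) * Xv i - Yq * Gv i.
Proof.
rewrite YqE mulrA -(sc_comm cc (Gv i)) -mulrA mulr_sumr.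
under eq_bigr => k _ do rewrite mulrA rgg mulrBl.
rewrite sumrB mulrBr; congr (_ - _).
  by rewrite sum2Xv mulrA -scM mulrC.
rewrite -mulrA mulr_suml; congr (_ * _); apply: eq_bigr => k _.
by rewrite -!mulrA commGXL.
Qed.

Lemma rDXL i k : Dv i * XL k = XL k * Dv i + sc (einv k i).
Proof.
rewrite /XL mulr_sumr mulr_suml.
under eq_bigr => m _ do rewrite mulrA sc_commr -mulrA rdx mulrDr.
rewrite big_split /=; congr (_ + _).
  by apply: eq_bigr => m _; rewrite mulrA.
rewrite -[RHS](sum_delta' (fun m => sc (einv k m)) i); apply: eq_bigr => m _.
by rewrite sc_comm eq_sym.
Qed.

Lemma rDY i : Dv i * Yq = Yq * Dv i + sc cc * GL i.
Proof.
rewrite YqE mulrA sc_commr -mulrA mulr_sumr.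
under eq_bigr => k _ do rewrite mulrA -rgd -mulrA rDXL mulrDr.
rewrite big_split mulrDr /=; congr (_ + _).
  by rewrite -mulrA mulr_suml; congr (_ * _); apply: eq_bigr => k _; rewrite mulrA.
congr (_ * _); apply: eq_bigr => k _; by rewrite sc_commr einvS.
Qed.

Lemma rGLY i : GL i * Yq = sc (2 * cc) * XL i - Yq * GL i.
Proof.
rewrite /GL /XL mulr_suml !mulr_sumr -sumrB; apply: eq_bigr => j _.
rewrite -mulrA rGY mulrBr; congr (_ - _).
  by rewrite !mulrA -!scM mulrC.
by rewrite !mulrA sc_comm.
Qed.

Definition sh (s : algC) (a : Qt) := a * Hq = (Hq + sc s) * a.

Lemma shD s a b : sh s a -> sh s b -> sh s (a + b).
Proof. by rewrite /sh => ha hb; rewrite [LHS]mulrDl ha hb -mulrDr. Qed.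
Lemma sh0 s : sh s 0.
Proof. by rewrite /sh mulr0 mul0r. Qed.
Lemma shM s t a b : sh s a -> sh t b -> sh (s + t) (a * b).
Proof.
rewrite /sh => ha hb.
rewrite -mulrA hb mulrA mulrDr ha sc_commr -mulrDl -addrA -scD mulrA.
done.
Qed.
Lemma shsc c : sh 0 (sc c).
Proof. by rewrite /sh sc0 addr0 sc_comm. Qed.
Lemma shZ s c a : sh s a -> sh s (sc c * a).
Proof. by move=> h; have := shM (shsc c) h; rewrite add0r. Qed.
Lemma shsum s (I : Type) (r : seq I) (P : pred I) (F : I -> Qt) :
  (forall i, P i -> sh s (F i)) -> sh s (\sum_(i <- r | P i) F i).
Proof. move=> h; apply: big_ind => //; [exact: sh0 | exact: shD]. Qed.

Definition Ssum := \sum_k (Dv k * Xv k + Xv k * Dv k).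
Lemma HqS : Hq = sc (-1/2) * Ssum. Proof. exact: HqE. Qed.

Lemma DS1 i k : Dv i * (Dv k * Xv k) = Dv k * Xv k * Dv i + sc (i == k)%:R * Dv k.
Proof. by rewrite mulrA rdd -mulrA rdx mulrDr mulrA sc_commr. Qed.
Lemma DS2 i k : Dv i * (Xv k * Dv k) = Xv k * Dv k * Dv i + sc (i == k)%:R * Dv k.
Proof. by rewrite mulrA rdx mulrDl -mulrA rdd mulrA. Qed.

Lemma DS i : Dv i * Ssum = Ssum * Dv i + sc 2 * Dv i.
Proof.
rewrite /Ssum mulr_sumr mulr_suml.
have -> : sc 2 * Dv i = \sum_k (sc (i == k)%:R * Dv k + sc (i == k)%:R * Dv k).
  by rewrite big_split /= sum_delta' scn mulr_natl mulr2n.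
rewrite -big_split /=; apply: eq_bigr => k _.
by rewrite mulrDr DS1 DS2 mulrDl addrACA.
Qed.

Lemma rxd i k : Xv i * Dv k = Dv k * Xv i - sc (k == i)%:R.
Proof. by rewrite rdx addrK. Qed.
Lemma XS1 i k : Xv i * (Dv k * Xv k) = Dv k * Xv k * Xv i - sc (k == i)%:R * Xv k.
Proof. by rewrite mulrA rxd mulrBl -mulrA rxx mulrA. Qed.
Lemma XS2 i k : Xv i * (Xv k * Dv k) = Xv k * Dv k * Xv i - sc (k == i)%:R * Xv k.
Proof. by rewrite mulrA rxx -mulrA rxd mulrBr mulrA sc_commr. Qed.

Lemma XS i : Xv i * Ssum = Ssum * Xv i - sc 2 * Xv i.
Proof.
rewrite /Ssum mulr_sumr mulr_suml.
have -> : sc 2 * Xv i = \sum_k (sc (k == i)%:R * Xv k + sc (k == i)%:R * Xv k).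
  by rewrite big_split /= sum_delta scn mulr_natl mulr2n.
rewrite -sumrB /=; apply: eq_bigr => k _.
by rewrite mulrDr XS1 XS2 mulrDl opprD addrACA.
Qed.

Lemma half2 : (-1/2 : algC) * 2 = -1.
Proof. by rewrite mulN1r mulNr mulVf // pnatr_eq0. Qed.

Lemma shDv i : sh (-1) (Dv i).
Proof.
rewrite /sh HqS mulrA sc_commr -mulrA DS mulrDr !mulrA -scM half2 mulrDl.
done.
Qed.
Lemma shXv i : sh 1 (Xv i).
Proof.
rewrite /sh HqS mulrA sc_commr -mulrA XS mulrBr !mulrA -scM half2 mulrDl.
by rewrite scN1 opprK sc1 mul1r.
Qed.
Lemma commGS i : GRing.comm (Gv i) Ssum.
Proof.
apply: commr_sum => k _; apply: commrD; apply: commrM.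
- exact: rgd.
- exact: rgx.
- exact: rgx.
- exact: rgd.
Qed.
Lemma shGv i : sh 0 (Gv i).
Proof.
rewrite /sh sc0 addr0 HqS mulrA sc_commr -mulrA commGS.
by rewrite mulrA.
Qed.

Lemma shU (m : int) a : sh m%:~R a -> forall k, a * Uv k = Uv (k + m) * a.
Proof.
move=> ha k.
have E : (Hq + sc (k + m)%:~R) * a = a * (Hq + sc k%:~R).
  rewrite [RHS]mulrDr ha sc_commr -mulrDl -addrA -scD -intrD (addrC m k).
  done.
symmetry.
rewrite -[Uv (k + m) * a]mulr1 -(rur k) !mulrA -(mulrA _ a) -E mulrA rul mul1r.
done.
Qed.

Lemma shM' s t u a b : sh s a -> sh t b -> u = s + t -> sh u (a * b).
Proof. by move=> ha hb ->; exact: shM. Qed.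

Lemma shXq : sh (-1) Xq.
Proof.
rewrite XqE; apply: (shM' (shsc _)); last by rewrite add0r.
apply: shsum => i _; apply: (shM' (shGv i) (shDv i)); by rewrite add0r.
Qed.
Lemma shXL i : sh 1 (XL i).
Proof.
apply: shsum => j _; apply: (shM' (shsc _) (shXv j)); by rewrite add0r.
Qed.
Lemma shYq : sh 1 Yq.
Proof.
rewrite YqE; apply: (shM' (shsc _)); last by rewrite add0r.
apply: shsum => i _; apply: (shM' (shGv i) (shXL i)); by rewrite add0r.
Qed.

Lemma intrN1 : ((-1 : int)%:~R : algC) = -1. Proof. exact: mulrN1z. Qed.
Lemma intr1 : ((1 : int)%:~R : algC) = 1. Proof. by []. Qed.
Lemma intr0 : ((0 : int)%:~R : algC) = 0. Proof. by []. Qed.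

Lemma DvU i k : Dv i * Uv k = Uv (k - 1) * Dv i.
Proof. by apply: shU; rewrite intrN1; exact: shDv. Qed.
Lemma XqU k : Xq * Uv k = Uv (k - 1) * Xq.
Proof. by apply: shU; rewrite intrN1; exact: shXq. Qed.
Lemma YqU k : Yq * Uv k = Uv (k + 1) * Yq.
Proof. by apply: shU; rewrite intr1; exact: shYq. Qed.
Lemma UYq k : Uv k * Yq = Yq * Uv (k - 1).
Proof. by rewrite YqU subrK. Qed.
Lemma GvU i k : Gv i * Uv k = Uv k * Gv i.
Proof. by rewrite (@shU 0) ?addr0 // intr0; exact: shGv. Qed.
Lemma HqYq : Hq * Yq = Yq * (Hq + sc (-1)).
Proof. by rewrite mulrDr shYq mulrDl sc1 mul1r sc_commr scN1 addrK. Qed.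

Definition PX z := exists z', Xq * z = z' * Xq.
Definition PY z := exists z', z * Yq = Yq * z'.

Lemma PX0 : PX 0. Proof. by exists 0; rewrite mulr0 mul0r. Qed.
Lemma PX1 : PX 1. Proof. by exists 1; rewrite mulr1 mul1r. Qed.
Lemma PXD a b : PX a -> PX b -> PX (a + b).
Proof. by move=> [a' ha] [b' hb]; exists (a' + b'); rewrite mulrDr mulrDl ha hb. Qed.
Lemma PXM a b : PX a -> PX b -> PX (a * b).
Proof. by move=> [a' ha] [b' hb]; exists (a' * b'); rewrite mulrA ha -mulrA hb mulrA. Qed.
Lemma PXsc c : PX (sc c). Proof. by exists (sc c); rewrite sc_comm. Qed.
Lemma PXH : PX Hq. Proof. by exists (Hq + sc (-1)); exact: shXq. Qed.
Lemma PXU k : PX (Uv k). Proof. by exists (Uv (k - 1)); exact: XqU. Qed.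
Lemma PXsum (I : Type) (r : seq I) (P : pred I) (F : I -> Qt) :
  (forall i, P i -> PX (F i)) -> PX (\sum_(i <- r | P i) F i).
Proof. move=> h; apply: big_ind => //; [exact: PX0 | exact: PXD]. Qed.
Lemma PXprod (I : Type) (r : seq I) (P : pred I) (F : I -> Qt) :
  (forall i, P i -> PX (F i)) -> PX (\prod_(i <- r | P i) F i).
Proof. move=> h; apply: big_ind => //; [exact: PX1 | exact: PXM]. Qed.
Lemma PXX a k : PX a -> PX (a ^+ k).
Proof. by move=> h; elim: k => [|k IH]; rewrite ?expr0 ?exprS; [exact: PX1 | exact: PXM]. Qed.

Lemma PY0 : PY 0. Proof. by exists 0; rewrite mulr0 mul0r. Qed.
Lemma PY1 : PY 1. Proof. by exists 1; rewrite mulr1 mul1r. Qed.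
Lemma PYD a b : PY a -> PY b -> PY (a + b).
Proof. by move=> [a' ha] [b' hb]; exists (a' + b'); rewrite mulrDr mulrDl ha hb. Qed.
Lemma PYM a b : PY a -> PY b -> PY (a * b).
Proof. by move=> [a' ha] [b' hb]; exists (a' * b'); rewrite -mulrA hb mulrA ha mulrA. Qed.
Lemma PYsc c : PY (sc c). Proof. by exists (sc c); rewrite sc_comm. Qed.
Lemma PYH : PY Hq. Proof. by exists (Hq + sc (-1)); exact: HqYq. Qed.
Lemma PYU k : PY (Uv k). Proof. by exists (Uv (k - 1)); exact: UYq. Qed.
Lemma PYsum (I : Type) (r : seq I) (P : pred I) (F : I -> Qt) :
  (forall i, P i -> PY (F i)) -> PY (\sum_(i <- r | P i) F i).
Proof. move=> h; apply: big_ind => //; [exact: PY0 | exact: PYD]. Qed.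
Lemma PYprod (I : Type) (r : seq I) (P : pred I) (F : I -> Qt) :
  (forall i, P i -> PY (F i)) -> PY (\prod_(i <- r | P i) F i).
Proof. move=> h; apply: big_ind => //; [exact: PY1 | exact: PYM]. Qed.
Lemma PYX a k : PY a -> PY (a ^+ k).
Proof. by move=> h; elim: k => [|k IH]; rewrite ?expr0 ?exprS; [exact: PY1 | exact: PYM]. Qed.

Lemma ckinv k m : cls (kinv n k m) =
  if odd k then Uv (m + (k.+1./2)%:Z) else sc ((- (k./2)%:R)^-1).
Proof. by rewrite /kinv; case: odd. Qed.

Lemma cphi m k : cls (phiH n m k) =
  \prod_(k' <- iota 1 k) (sc ((-1) ^+ k') * cls (kinv n k' m)).
Proof. by rewrite /phiH cfoldmul; apply: eq_bigr => k' _; rewrite cM. Qed.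

Lemma PXphi m k : PX (cls (phiH n m k)).
Proof.
rewrite cphi; apply: PXprod => k' _; apply: PXM; first exact: PXsc.
rewrite ckinv; case: odd; [exact: PXU | exact: PXsc].
Qed.
Lemma PYphi m k : PY (cls (phiH n m k)).
Proof.
rewrite cphi; apply: PYprod => k' _; apply: PYM; first exact: PYsc.
rewrite ckinv; case: odd; [exact: PYU | exact: PYsc].
Qed.
Lemma Gphi i m k : Gv i * cls (phiH n m k) = cls (phiH n m k) * Gv i.
Proof.
rewrite cphi; apply: commr_prod => k' _; apply: commrM; first exact: esym (sc_comm _ _).
rewrite ckinv; case: odd; [exact: GvU | exact: esym (sc_comm _ _)].
Qed.
Lemma passD (x a b a' b' : Qt) : x * a = a' * x -> x * b = b' * x -> x * (a * b) = (a' * b') * x.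
Proof. by move=> ha hb; rewrite mulrA ha -mulrA hb mulrA. Qed.

Lemma Dphi i m k : Dv i * cls (phiH n m k) = cls (phiH n (m - 1) k) * Dv i.
Proof.
rewrite !cphi; elim: (iota 1 k) => [|k' s IH]; first by rewrite !big_nil mulr1 mul1r.
rewrite !big_cons; apply: passD IH; apply: passD; first exact: sc_commr.
rewrite !ckinv; case: odd; first by rewrite DvU addrAC.
exact: sc_commr.
Qed.

Lemma cpolyH p : cls (polyH n p) = \sum_(0 <= i < size p) sc p`_i * Hq ^+ i.
Proof. by rewrite /polyH csumn; apply: eq_bigr => i _; rewrite cscale cpow. Qed.
Lemma cratH p s : cls (ratH n p s) = cls (polyH n p) * \prod_(k <- s) Uv k.
Proof. by rewrite /ratH cM cfoldmul. Qed.
Lemma PXrat p s : PX (cls (ratH n p s)).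
Proof.
rewrite cratH cpolyH; apply: PXM; first apply: PXsum => i _.
  by apply: PXM; [exact: PXsc | apply: PXX; exact: PXH].
by apply: PXprod => k _; exact: PXU.
Qed.
Lemma PYrat p s : PY (cls (ratH n p s)).
Proof.
rewrite cratH cpolyH; apply: PYM; first apply: PYsum => i _.
  by apply: PYM; [exact: PYsc | apply: PYX; exact: PYH].
by apply: PYprod => k _; exact: PYU.
Qed.

Definition IIq z := exists p q r s, z = Yq * p + Fq * q + (r * Xq + s * Eq).
Lemma II0 : IIq 0.
Proof. by exists 0, 0, 0, 0; rewrite !mulr0 !mul0r !addr0. Qed.
Lemma IIY p : IIq (Yq * p).
Proof. by exists p, 0, 0, 0; rewrite !mulr0 !mul0r !addr0. Qed.
Lemma IIX r : IIq (r * Xq).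
Proof. by exists 0, 0, r, 0; rewrite !mulr0 !mul0r !addr0 add0r. Qed.
Lemma IID a b : IIq a -> IIq b -> IIq (a + b).
Proof.
move=> [p [q [r [s ->]]]] [p' [q' [r' [s' ->]]]].
exists (p + p'), (q + q'), (r + r'), (s + s').
rewrite !mulrDr !mulrDl.
by rewrite addrACA; congr (_ + _); exact: addrACA.
Qed.
Lemma IIN a : IIq a -> IIq (- a).
Proof.
move=> [p [q [r [s ->]]]]; exists (- p), (- q), (- r), (- s).
by rewrite !mulrN !mulNr !opprD.
Qed.
Lemma IIB a b : IIq a -> IIq b -> IIq (a - b).
Proof. by move=> ha hb; apply: IID ha (IIN hb). Qed.
Lemma IIsc c a : IIq a -> IIq (sc c * a).
Proof.
move=> [p [q [r [s ->]]]]; exists (sc c * p), (sc c * q), (sc c * r), (sc c * s).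
rewrite !mulrDr !mulrA -!(sc_comm c) //.
Qed.

Definition meq a b := IIq (a - b).

Lemma inII_of t : IIq (cls t) -> inII eta t.
Proof.
move=> [p [q [r [s E]]]]; exists (rep p), (rep q), (rep r), (rep s).
apply: (proj1 (cls_eq _ _)). by rewrite E !cD (cM (Yterm eta)) (cM (Fterm eta)) (cM (rep r)) (cM (rep s)) !repK.
Qed.

Lemma diamondQ a b c N :
  (forall k, (N <= k)%N -> IIq (cls a * cls (phiH n 0 k) * Yq ^+ k * Xq ^+ k * cls b)) ->
  IIq (\sum_(0 <= k < N) (cls a * cls (phiH n 0 k) * Yq ^+ k * Xq ^+ k * cls b) - cls c) ->
  diamond_is eta a b c.
Proof.
move=> h1 h2; exists N; split.
  by move=> k hk; apply: inII_of; rewrite /dterm !cM !cpow; exact: h1.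
apply: inII_of; rewrite csub csumn.
under eq_bigr => k _ do rewrite /dterm !cM !cpow.
exact: h2.
Qed.

Lemma meq_refl : Reflexive meq.
Proof. by move=> a; rewrite /meq subrr; exact: II0. Qed.
Lemma meq_sym : Symmetric meq.
Proof. by move=> a b h; rewrite /meq -opprB; exact: IIN. Qed.
Lemma meq_trans : Transitive meq.
Proof. by move=> a b c h1 h2; rewrite /meq -[a](subrK b) -addrA; exact: IID. Qed.
#[local] Instance meq_Equiv : Equivalence meq.
Proof. split; [exact: meq_refl | exact: meq_sym | exact: meq_trans]. Qed.
#[local] Instance add_meq : Proper (meq ==> meq ==> meq) (@GRing.add Qt).
Proof. by move=> a a' ha b b' hb; rewrite /meq opprD addrACA; exact: IID. Qed.
#[local] Instance opp_meq : Proper (meq ==> meq) (@GRing.opp Qt).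
Proof. by move=> a a' ha; rewrite /meq -opprD; exact: IIN. Qed.
#[local] Instance scmul_meq c : Proper (meq ==> meq) (@GRing.mul Qt (sc c)).
Proof. by move=> a a' ha; rewrite /meq -mulrBr; exact: IIsc. Qed.

Lemma mY p : meq (Yq * p) 0.
Proof. by rewrite /meq subr0; exact: IIY. Qed.
Lemma mX r : meq (r * Xq) 0.
Proof. by rewrite /meq subr0; exact: IIX. Qed.


Lemma ccsq : cc * cc = -1/2.
Proof. by rewrite /cc -lock -expr2 expr_div_n sqrCi sqrtCK. Qed.

Lemma mulrsc a b c : a * (sc c * b) = sc c * (a * b).
Proof. by rewrite mulrA sc_commr -mulrA. Qed.
Lemma mulscl a b c : sc c * a * b = sc c * (a * b).
Proof. by rewrite mulrA. Qed.
Lemma scsc c d a : sc c * (sc d * a) = sc (c * d) * a.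
Proof. by rewrite mulrA scM. Qed.

Lemma IIPXm M B m k : (exists B', Xq ^+ m * B = B' * Xq) -> (m <= k)%N ->
  IIq (M * Xq ^+ k * B).
Proof.
move=> [B' hB] hk.
rewrite (_ : M * Xq ^+ k * B = (M * Xq ^+ (k - m) * B') * Xq); first exact: IIX.
by rewrite -!mulrA -hB !mulrA -(mulrA M (Xq ^+ (k - m))) -exprD subnK.
Qed.
Lemma IIPYm L R m k : (exists L', L * Yq ^+ m = Yq * L') -> (m <= k)%N ->
  IIq (L * Yq ^+ k * R).
Proof.
move=> [L' hL] hk.
rewrite (_ : L * Yq ^+ k * R = Yq * (L' * Yq ^+ (k - m) * R)); first exact: IIY.
by rewrite !mulrA -hL -(mulrA L (Yq ^+ m)) -exprD subnKC.
Qed.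

Lemma DUX j : GRing.comm (DU j) Xq.
Proof.
apply: commr_sym; apply: commr_sum => k _; apply: commrM; first exact: sc_commr.
exact: commr_sym (commDX k).
Qed.

Lemma X2G j : exists B', Xq ^+ 2 * Gv j = B' * Xq.
Proof.
exists (sc (2 * cc) * DU j - Xq * Gv j).
rewrite expr2 -mulrA {1}rXG mulrBr mulrBl mulrsc.
congr (_ - _); last by rewrite mulrA.
by rewrite -mulrA DUX.
Qed.

Lemma X2x j : Xq ^+ 2 * Xv j = Xv j * Xq * Xq + sc (cc * (2 * cc)) * DU j.
Proof.
rewrite expr2 -mulrA rXx mulrDr mulrA rXx mulrsc rXG mulrBr mulrDl.
rewrite -addrA; congr (_ + _).
by rewrite mulscl scsc addrCA subrr addr0.
Qed.

Lemma X3x j : exists B', Xq ^+ 3 * Xv j = B' * Xq.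
Proof.
exists (Xq * (Xv j * Xq) + sc (cc * (2 * cc)) * DU j).
rewrite exprS -mulrA X2x mulrDr [RHS]mulrDl !mulrA; congr (_ + _).
by rewrite sc_commr -!mulrA DUX.
Qed.

Lemma c2c2 : (2 * cc) * (2 * cc) = -2.
Proof. rewrite mulrACA ccsq; field; by rewrite ?pnatr_eq0. Qed.
Lemma cc2c : cc * (2 * cc) = -1.
Proof. rewrite mulrCA ccsq; field; by rewrite ?pnatr_eq0. Qed.
Lemma c2cc : (2 * cc) * cc = -1.
Proof. by rewrite mulrC cc2c. Qed.


Lemma K4 i j P P' : Gv i * P = P * Gv i -> P * Yq = Yq * P' ->
  meq (Gv i * P * Yq * Xq * Gv j) (sc (-2) * (P * Xv i * DU j)).
Proof.
move=> hG hY.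
rewrite -mulrA rXG mulrBr [_ * (Gv j * Xq)]mulrA mX subr0.
rewrite hG -(mulrA P) rGY mulrBr mulrBl [P * (Yq * Gv i)]mulrA hY -!mulrA mY subr0.
rewrite -?mulrA; repeat (rewrite scsc || rewrite mulrsc); rewrite c2c2; reflexivity.
Qed.

Lemma K3 i j P P' P'' : Dv i * P = P' * Dv i -> P' * Yq = Yq * P'' ->
  meq (Dv i * P * Yq * Xq * Gv j) (sc (-1) * (P' * GL i * DU j)).
Proof.
move=> hD hY.
rewrite -mulrA rXG mulrBr [_ * (Gv j * Xq)]mulrA mX subr0.
rewrite hD -(mulrA P') rDY mulrDr mulrDl [P' * (Yq * Dv i)]mulrA hY -!mulrA mY add0r.
rewrite -?mulrA; repeat (rewrite scsc || rewrite mulrsc); rewrite cc2c; reflexivity.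
Qed.

Lemma K5a i j P P' P'' : Dv i * P = P' * Dv i -> P' * Yq = Yq * P'' ->
  meq (Dv i * P * Yq * Xq * Xv j) (sc (-1/2) * (P' * GL i * Gv j)).
Proof.
move=> hD hY.
rewrite -mulrA rXx mulrDr [_ * (Xv j * Xq)]mulrA mX add0r.
rewrite hD -(mulrA P') rDY mulrDr mulrDl [P' * (Yq * Dv i)]mulrA hY -!mulrA mY add0r.
rewrite -?mulrA; repeat (rewrite scsc || rewrite mulrsc); rewrite ccsq; reflexivity.
Qed.

Lemma DYY i : Dv i * Yq ^+ 2 = Yq * (Dv i * Yq - sc cc * GL i) + sc (cc * (2 * cc)) * XL i.
Proof.
rewrite expr2 mulrA {1}rDY mulrDl mulscl rGLY mulrBr scsc mulrBr mulrsc [Yq * (Dv i * Yq)]mulrA.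
by rewrite addrA addrAC.
Qed.

Lemma K5b i j P P' P'' : Dv i * P = P' * Dv i -> P' * Yq = Yq * P'' ->
  meq (Dv i * P * Yq ^+ 2 * Xq ^+ 2 * Xv j) (P' * XL i * DU j).
Proof.
move=> hD hY.
rewrite -mulrA X2x mulrDr [_ * (Xv j * Xq * Xq)]mulrA mX add0r.
rewrite hD -(mulrA P') DYY mulrDr mulrDl [P' * (Yq * _)]mulrA hY -!mulrA mY add0r.
rewrite -?mulrA; repeat (rewrite scsc || rewrite mulrsc); rewrite cc2c mulN1r opprK sc1 mul1r; reflexivity.
Qed.

Lemma K6 i j P P' : Gv i * P = P * Gv i -> P * Yq = Yq * P' ->
  meq (Gv i * P * Yq * Xq * Xv j) (sc (-1) * (P * Xv i * Gv j)).
Proof.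
move=> hG hY.
rewrite -mulrA rXx mulrDr [_ * (Xv j * Xq)]mulrA mX add0r.
rewrite hG -(mulrA P) rGY mulrBr mulrBl [P * (Yq * Gv i)]mulrA hY -!mulrA mY subr0.
rewrite -?mulrA; repeat (rewrite scsc || rewrite mulrsc); rewrite c2cc; reflexivity.
Qed.

Lemma GY2 i P P' : Gv i * P = P * Gv i -> P * Yq = Yq * P' ->
  exists L', Gv i * P * Yq ^+ 2 = Yq * L'.
Proof.
move=> hG hY; exists (P' * (sc (2 * cc) * Xv i - Gv i * Yq)).
rewrite hG -mulrA [RHS]mulrA -hY -mulrA; congr (P * _).
by rewrite expr2 mulrA {1}rGY mulrBl mulrBr mulscl commXY mulrsc -mulrA.
Qed.

Lemma phi0 m : cls (phiH n m 0) = 1.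
Proof. by rewrite cphi big_nil. Qed.

Lemma sum1 (F : nat -> Qt) : \sum_(0 <= k < 1) F k = F 0%N.
Proof. by rewrite big_nat1. Qed.
Lemma sum2 (F : nat -> Qt) : \sum_(0 <= k < 2) F k = F 0%N + F 1%N.
Proof. by rewrite big_nat_recr //= big_nat1. Qed.
Lemma sum3 (F : nat -> Qt) : \sum_(0 <= k < 3) F k = F 0%N + F 1%N + F 2%N.
Proof. by rewrite big_nat_recr //= big_nat_recr //= big_nat1. Qed.

Lemma meqE a b : meq a b -> IIq (a - b). Proof. by []. Qed.

Lemma claim1 a j : diamond_is eta a (td j) (tmul a (td j)).
Proof.
apply: (@diamondQ _ _ _ 1).
  move=> k hk; apply: (@IIPXm _ _ 1) => //.
  by exists (Dv j); rewrite expr1; exact: esym (commDX j).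
by rewrite sum1 phi0 !expr0 !mulr1 cM subrr; exact: II0.
Qed.

Lemma claim2 a i : diamond_is eta (tx i) a (tmul (tx i) a).
Proof.
apply: (@diamondQ _ _ _ 1).
  move=> k hk; rewrite -mulrA; apply: (@IIPYm _ _ 1) => //.
  have [P' hP] := PYphi 0 k.
  by exists (Xv i * P'); rewrite expr1 -mulrA hP mulrA (commXY i) mulrA.
by rewrite sum1 phi0 !expr0 !mulr1 cM subrr; exact: II0.
Qed.

Lemma claim3 i j : diamond_is eta (td i) (tg j)
  (tsub (tmul (td i) (tg j)) (tmul (tmul (phiH n (-1) 1) (glow eta i)) (dup eta j))).
Proof.
apply: (@diamondQ _ _ _ 2).
  by move=> k hk; apply: (@IIPXm _ _ 2) => //; exact: X2G.
apply: meqE; rewrite sum2 phi0 !expr0 !mulr1 !expr1 csub (cM (td i)) (cM (tmul _ _) (dup eta j)) (cM (phiH n _ _)) GLE DUE.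
have hD := Dphi i 0 1; rewrite sub0r in hD.
have [P'' hY] := PYphi (-1) 1.
rewrite (K3 j hD hY) scN1; reflexivity.
Qed.

Lemma claim4 i j : diamond_is eta (tg i) (tg j)
  (tsub (tmul (tg i) (tg j)) (tscale 2 (tmul (tmul (phiH n 0 1) (tx i)) (dup eta j)))).
Proof.
apply: (@diamondQ _ _ _ 2).
  by move=> k hk; apply: (@IIPXm _ _ 2) => //; exact: X2G.
apply: meqE; rewrite sum2 phi0 !expr0 !mulr1 !expr1 csub cscale (cM (tg i)) (cM (tmul _ _) (dup eta j)) (cM (phiH n _ _)) DUE.
have [P' hY] := PYphi 0 1.
rewrite (K4 j (Gphi i 0 1) hY) scN mulNr; reflexivity.
Qed.

Lemma claim5 i j : diamond_is eta (td i) (tx j)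
  (tadd (tsub (tmul (td i) (tx j))
              (tscale (1/2) (tmul (tmul (phiH n (-1) 1) (glow eta i)) (tg j))))
        (tmul (tmul (phiH n (-1) 2) (xlow eta i)) (dup eta j))).
Proof.
apply: (@diamondQ _ _ _ 3).
  by move=> k hk; apply: (@IIPXm _ _ 3) => //; exact: X3x.
apply: meqE; rewrite sum3 phi0 !expr0 !mulr1 !expr1 cD csub cscale (cM (td i)) (cM (tmul _ _) (tg j)) (cM (phiH n _ _)) (cM (tmul _ _) (dup eta j)) (cM (phiH n _ _)) GLE DUE XLE.
have hD1 := Dphi i 0 1; rewrite sub0r in hD1.
have hD2 := Dphi i 0 2; rewrite sub0r in hD2.
have [P1 hY1] := PYphi (-1) 1.
have [P2 hY2] := PYphi (-1) 2.
rewrite (K5a j hD1 hY1) (K5b j hD2 hY2) mulNr scN mulNr; reflexivity.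
Qed.

Lemma claim6 i j : diamond_is eta (tg i) (tx j)
  (tsub (tmul (tg i) (tx j)) (tmul (tmul (phiH n 0 1) (tx i)) (tg j))).
Proof.
apply: (@diamondQ _ _ _ 2).
  move=> k hk; rewrite -mulrA; apply: (@IIPYm _ _ 2) => //.
  have [P' hY] := PYphi 0 k.
  exact: (GY2 (Gphi i 0 k) hY).
apply: meqE; rewrite sum2 phi0 !expr0 !mulr1 !expr1 csub (cM (tg i)) (cM (tmul _ _) (tg j)) (cM (phiH n _ _)).
have [P' hY] := PYphi 0 1.
rewrite (K6 j (Gphi i 0 1) hY) scN1; reflexivity.
Qed.

Lemma claim7 p s a : diamond_is eta (ratH n p s) a (tmul (ratH n p s) a) /\
  diamond_is eta a (ratH n p s) (tmul a (ratH n p s)).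
Proof.
split; apply: (@diamondQ _ _ _ 1).
- move=> k hk; rewrite -mulrA; apply: (@IIPYm _ _ 1) => //.
  have [L' hL] := PYM (PYrat p s) (PYphi 0 k).
  by exists L'; rewrite expr1.
- by rewrite sum1 phi0 !expr0 !mulr1 cM subrr; exact: II0.
- move=> k hk; apply: (@IIPXm _ _ 1) => //.
  have [R' hR] := PXrat p s.
  by exists R'; rewrite expr1.
- by rewrite sum1 phi0 !expr0 !mulr1 cM subrr; exact: II0.
Qed.
End Quot.

Theorem proposition4p1 (n : nat) (eta : 'M[algC]_n)
    (hn : (0 < n)%N) (eta_sym : eta^T = eta) (eta_inv : eta \in unitmx) :
  (forall (a : term n) (j : 'I_n),
      diamond_is eta a (td j) (tmul a (td j))) /\
  (forall (a : term n) (i : 'I_n),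
      diamond_is eta (tx i) a (tmul (tx i) a)) /\
  (forall i j : 'I_n,
      diamond_is eta (td i) (tg j)
        (tsub (tmul (td i) (tg j))
              (tmul (tmul (@phiH n (-1) 1) (glow eta i)) (dup eta j)))) /\
  (forall i j : 'I_n,
      diamond_is eta (tg i) (tg j)
        (tsub (tmul (tg i) (tg j))
              (tscale 2 (tmul (tmul (@phiH n 0 1) (tx i)) (dup eta j))))) /\
  (forall i j : 'I_n,
      diamond_is eta (td i) (tx j)
        (tadd (tsub (tmul (td i) (tx j))
                    (tscale (1/2) (tmul (tmul (@phiH n (-1) 1) (glow eta i)) (tg j))))
              (tmul (tmul (@phiH n (-1) 2) (xlow eta i)) (dup eta j)))) /\
  (forall i j : 'I_n,
      diamond_is eta (tg i) (tx j)
        (tsub (tmul (tg i) (tx j))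
              (tmul (tmul (@phiH n 0 1) (tx i)) (tg j)))) /\
  (forall (p : {poly algC}) (s : seq int) (a : term n),
      diamond_is eta (@ratH n p s) a (tmul (@ratH n p s) a) /\
      diamond_is eta a (@ratH n p s) (tmul a (@ratH n p s))).
Proof.
split; first by move=> a j; apply: claim1.
split; first by move=> a i; apply: claim2.
split; first by move=> i j; apply: claim3.
split; first by move=> i j; apply: claim4.
split; first by move=> i j; apply: claim5.
split; first by move=> i j; apply: claim6.
by move=> p s a; apply: claim7.
Qed.
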